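(* For every integer $d\ge 3$, $\lambda(d,2^{d-3})\ge 1-\dfrac{3^d-2}{7^{d-1}}$.
   Context: A $d$-subcube of $\{0,1\}^n$ is a set $C\subseteq\{0,1\}^n$ obtained by fixing $n-d$ coordinates to constant values and letting the remaining $d$ coordinates vary arbitrarily; there are $\binom nd 2^{n-d}$ of them. For integers $0\le s\le 2^d$ and $S\subseteq\{0,1\}^n$, let $\Lambda(S,d,s)$ be the number of $d$-subcubes $C$ with $|S\cap C|=s$, let $\Lambda(n,d,s)=\max\{\Lambda(S,d,s): S\subseteq\{0,1\}^n\}$ for $n\ge d$, and let $\lambda(d,s)=\lim_{n\to\infty}\Lambda(n,d,s)/\big(\binom nd 2^{n-d}\big)$ (the limit exists since the ratio is non-increasing in $n$). *)

(* Defs.v *)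
From HB Require Import structures.
From mathcomp Require Import all_boot all_order all_algebra.
From mathcomp Require Import all_classical all_reals all_analysis.
Set Implicit Arguments. Unset Strict Implicit. Unset Printing Implicit Defensive.
Import Order.TTheory GRing.Theory Num.Theory.
Import numFieldNormedType.Exports.

Definition cube (n : nat) := {ffun 'I_n -> bool}.

Definition is_subcube (n d : nat) (C : {set cube n}) : bool :=
  [exists F : {set 'I_n}, (#|F| == d) &&
     [exists a : cube n, C == [set x : cube n | [forall i in ~: F, x i == a i]]]].

Definition LamS (n d s : nat) (S : {set cube n}) : nat :=
  #|[set C : {set cube n} | is_subcube d C && (#|S :&: C| == s)]|.

Definition Lam (n d s : nat) : nat :=
  \max_(S : {set cube n}) LamS d s S.

(* lambda(d,s) = lim_{n -> oo} Lambda(n,d,s) / (C(n,d) 2^(n-d));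
   the sequence is indexed by k = n - d (so n = k + d >= d). *)
Definition lambda (R : realType) (d s : nat) : R :=
  limn (fun k : nat =>
    ((Lam (k + d) d s)%:R / ('C(k + d, d) * 2 ^ k)%:R)%R : R).

(* Main.v *)
Require Import Defs.
From HB Require Import structures.
From mathcomp Require Import all_boot all_order all_algebra.
From mathcomp Require Import ring zify.
Import Order.TTheory GRing.Theory Num.Theory.

Module Aux.
Set Implicit Arguments. Unset Strict Implicit. Unset Printing Implicit Defensive.
Definition compat (o : option bool) (b : bool) := if o is Some b' then b == b' else true.
Definition cset n (c : {ffun 'I_n -> option bool}) : {set cube n} :=
  [set x : cube n | [forall i, compat (c i) (x i)]].
Definition free n (c : {ffun 'I_n -> option bool}) : {set 'I_n} := [set i | c i == None].
Definition Pc n d s (S : {set cube n}) :=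
  [set c : {ffun 'I_n -> option bool} | (#|free c| == d) && (#|S :&: cset c| == s)].

Definition pt n (c : {ffun 'I_n -> option bool}) : cube n := [ffun i => odflt false (c i)].
Definition flip n (i : 'I_n) (x : cube n) : cube n := [ffun j => if j == i then ~~ x j else x j].

Lemma pt_in n c : @pt n c \in cset c.
Proof. by rewrite inE; apply/forallP => i; rewrite ffunE; case: (c i) => [b|] //=. Qed.

Lemma cset_some n c x i b : x \in @cset n c -> c i = Some b -> x i = b.
Proof. by rewrite inE => /forallP /(_ i) + E; rewrite E => /eqP. Qed.

Lemma cset_none n c x i : x \in @cset n c -> c i = None -> flip i x \in cset c.
Proof.
rewrite !inE => /forallP H E; apply/forallP => j; rewrite ffunE.
by case: eqP => [->|_]; [rewrite E | exact: H].
Qed.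

Lemma cset_inj n : injective (@cset n).
Proof.
move=> c1 c2 E; apply/ffunP => i.
have key : forall c c', cset c = cset c' -> forall b, c i = Some b -> c' i = Some b.
  move=> c c' E' b Hb.
  have x1 : pt c \in cset c' by rewrite -E' pt_in.
  case Hc: (c' i) => [b'|].
    by rewrite -(cset_some x1 Hc) (cset_some (pt_in c) Hb).
  have h1 : flip i (pt c') \in cset c by rewrite E' cset_none // pt_in.
  have h2 : pt c' \in cset c by rewrite E' pt_in.
  have := cset_some h2 Hb; have := cset_some h1 Hb; rewrite /flip ffunE eqxx => <-.
  by case: (pt c' i).
case H1: (c1 i) => [b|]; first by rewrite (key _ _ E b H1).
case H2: (c2 i) => [b|] //.
by rewrite (key _ _ (esym E) b H2) in H1.
Qed.

Lemma subcubeP n d (C : {set cube n}) :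
  is_subcube d C = [exists c, (#|free c| == d) && (C == cset c)].
Proof.
apply/idP/idP.
  case/existsP => F /andP [/eqP hF /existsP [a /eqP ->]].
  apply/existsP; exists [ffun i => if i \in F then None else Some (a i)].
  have -> : free [ffun i => if i \in F then None else Some (a i)] = F.
    by apply/setP => i; rewrite inE ffunE; case: (i \in F).
  rewrite hF eqxx /=; apply/eqP/setP => x; rewrite !inE.
  apply/forallP/forallP => H i.
    rewrite ffunE; case: ifP => hi //=; move: (H i); rewrite inE hi /=.
    by [].
  by rewrite inE; move: (H i); rewrite ffunE; case: (i \in F).
case/existsP => c /andP [/eqP hc /eqP ->].
apply/existsP; exists (free c); rewrite hc eqxx /=.
apply/existsP; exists (pt c); apply/eqP/setP => x; rewrite !inE.
apply/forallP/forallP => H i.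
  by rewrite !inE ffunE; move: (H i); case: (c i).
by move: (H i); rewrite !inE ffunE; case: (c i).
Qed.

Lemma LamSE n d s (S : {set cube n}) : LamS d s S = #|Pc d s S|.
Proof.
rewrite /LamS -(card_imset _ (@cset_inj n)); apply: eq_card => C.
rewrite inE subcubeP; apply/andP/imsetP.
  case => /existsP [c /andP [hc /eqP EC]] hs; exists c => //.
  by rewrite inE hc -EC hs.
case => c; rewrite inE => /andP [hc hs] ->; split => //.
by apply/existsP; exists c; rewrite hc eqxx.
Qed.

Lemma cardsum (T : finType) (P : pred T) : #|[set x | P x]| = \sum_x (P x : nat).
Proof. by rewrite -sum1_card big_mkcond; apply: eq_bigr => x _; rewrite inE; case: (P x). Qed.

Section PartA.
Variable n : nat.
Definition ext (i : 'I_n.+1) b (y : cube n) : cube n.+1 :=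
  [ffun j => if unlift i j is Some j' then y j' else b].
Definition res (i : 'I_n.+1) (c : {ffun 'I_n.+1 -> option bool}) : {ffun 'I_n -> option bool} :=
  [ffun j => c (lift i j)].
Definition Sres i b (S : {set cube n.+1}) := [set y | ext i b y \in S].

Lemma ext_lift i b y j : ext i b y (lift i j) = y j.
Proof. by rewrite ffunE liftK. Qed.
Lemma ext_i i b y : ext i b y i = b.
Proof. by rewrite ffunE unlift_none. Qed.
Lemma ext_inj i b : injective (ext i b).
Proof. by move=> y1 y2 E; apply/ffunP => j; rewrite -!(ext_lift i b) E. Qed.

Lemma cset_ext i b (c : {ffun 'I_n.+1 -> option bool}) : c i = Some b -> cset c = ext i b @: cset (res i c).
Proof.
move=> H; apply/setP => x; apply/idP/imsetP.
  move=> xC; exists [ffun j => x (lift i j)].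
    rewrite inE; apply/forallP => j; rewrite !ffunE.
    by move: xC; rewrite inE => /forallP /(_ (lift i j)).
  apply/ffunP => j; rewrite ffunE; case: unliftP => [j'|] ->; rewrite ?ffunE //.
  exact: cset_some xC H.
case=> y; rewrite !inE => /forallP yC ->; apply/forallP => j.
case: (unliftP i j) => [j'|] ->; first by rewrite ext_lift; move: (yC j'); rewrite ffunE.
by rewrite ext_i H /=.
Qed.

Lemma free_res i b (c : {ffun 'I_n.+1 -> option bool}) : c i = Some b -> #|free (res i c)| = #|free c|.
Proof.
move=> H; rewrite -(card_imset _ (@lift_inj _ i)); apply: eq_card => j.
case: (unliftP i j) => [j'|] ->.
  by rewrite mem_imset ?inE ?ffunE //; exact: lift_inj.
rewrite !inE H /=; apply/imsetP => [[j' _ E]].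
by move: (neq_lift i j'); rewrite -E eqxx.
Qed.

Lemma Sres_card i b (c : {ffun 'I_n.+1 -> option bool}) (S : {set cube n.+1}) : c i = Some b ->
  #|S :&: cset c| = #|Sres i b S :&: cset (res i c)|.
Proof.
move=> H; rewrite -(card_imset _ (@ext_inj i b)); apply: eq_card => x.
rewrite inE (cset_ext H); apply/andP/imsetP.
  case=> xS /imsetP [y yC E]; exists y => //.
  by rewrite in_setI yC andbT inE -E.
case=> y; rewrite in_setI => /andP [yS yC] ->; split => //; first by rewrite inE in yS.
exact: imset_f.
Qed.
Lemma keyA d s (S : {set cube n.+1}) :
  (n.+1 - d) * #|Pc d s S| <= 2 * n.+1 * Lam n d s.
Proof.
have cnt : forall c, c \in Pc d s S ->
    #|[set p : 'I_n.+1 * bool | c p.1 == Some p.2]| = n.+1 - d.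
  move=> c; rewrite inE => /andP [/eqP hc _].
  have -> : [set p : 'I_n.+1 * bool | c p.1 == Some p.2] =
            [set (i, odflt false (c i)) | i in ~: free c].
    apply/setP => [[i b]]; rewrite inE /=; apply/eqP/imsetP.
      move=> E; exists i; first by rewrite !inE E.
      by rewrite E.
    by case=> j; rewrite !inE => hj [-> ->]; case: (c j) hj.
  rewrite card_imset; last by move=> i j [].
  by rewrite cardsCs setCK card_ord hc.
have step : forall p : 'I_n.+1 * bool,
    #|[set c in Pc d s S | c p.1 == Some p.2]| <= Lam n d s.
  move=> [i b] /=.
  apply: (@leq_trans #|Pc d s (Sres i b S)|); last first.
    by rewrite -LamSE /Lam; exact: (@leq_bigmax _ (fun S => LamS d s S) (Sres i b S)).
  rewrite -(card_in_imset (f := res i)).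
    apply: subset_leq_card; apply/subsetP => c' /imsetP [c].
    rewrite !inE => /andP [/andP [hf hs] /eqP hci] ->.
    by rewrite (free_res hci) hf -(Sres_card S hci) hs.
  move=> c1 c2; rewrite !inE => /andP [_ /eqP h1] /andP [_ /eqP h2] E.
  apply/ffunP => j; case: (unliftP i j) => [j'|] ->; last by rewrite h1 h2.
  by move/ffunP: E => /(_ j'); rewrite !ffunE.
rewrite mulnC -sum_nat_const.
rewrite (eq_bigr _ (fun c hc => esym (cnt c hc))).
under eq_bigr do rewrite cardsum.
rewrite exchange_big /=.
apply: (@leq_trans (\sum_(p : 'I_n.+1 * bool) Lam n d s)).
  apply: leq_sum => p _; apply: leq_trans (step p).
  by rewrite cardsum big_mkcond; apply: leq_sum => c _; case: (_ \in _).
  rewrite sum_nat_const; apply: eq_leq; congr (_ * _). have := card_prod ('I_n.+1) bool. rewrite card_ord card_bool mulnC. move=> <-. apply: eq_card => x. by [].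
Qed.
End PartA.

Lemma monoN d s k : (Lam (k.+1 + d) d s * ('C(k + d, d) * 2 ^ k) <=
   Lam (k + d) d s * ('C(k.+1 + d, d) * 2 ^ k.+1))%N.
Proof.
rewrite addSn; set n := k + d.
have hL : Lam n.+1 d s * k.+1 <= 2 * n.+1 * Lam n d s.
  have cp : 0 < #|{set cube n.+1}| by apply/card_gt0P; exists set0.
  rewrite /Lam; have [S ->] := @bigop.eq_bigmax _ (fun S => LamS d s S) cp. rewrite LamSE mulnC.
  have -> : k.+1 = n.+1 - d by rewrite /n -addSn addnK.
  exact: keyA.
have hb : n.+1 * 'C(n, d) = k.+1 * 'C(n.+1, d).
  by rewrite (mul_bin_down n.+1 d) /n -addSn addnK.
rewrite -(leq_pmul2r (ltn0Sn k)).
set L1 := Lam n.+1 d s; set L0 := Lam n d s; set C := 'C(n, d); set C1 := 'C(n.+1, d).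
have e1 : L1 * (C * 2 ^ k) * k.+1 = (L1 * k.+1) * (C * 2 ^ k) by ring.
have e2 : L0 * (C1 * 2 ^ k.+1) * k.+1 = (2 * n.+1 * L0) * (C * 2 ^ k).
  have -> : L0 * (C1 * 2 ^ k.+1) * k.+1 = L0 * (2 * 2 ^ k) * (k.+1 * C1) by rewrite expnS; ring.
  rewrite -hb; ring.
by rewrite e1 e2 leq_mul2r hL orbT.
Qed.

Definition V := (bool * bool * bool)%type.
Definition vxor (a b : V) : V := let: (a1,a2,a3) := a in let: (b1,b2,b3) := b in (a1 (+) b1, a2 (+) b2, a3 (+) b3).
Definition v0 : V := (false,false,false).
Lemma vxorA : associative vxor. Proof. by do 3!case=> [[? ?] ?] /=; rewrite !addbA. Qed.
Lemma vxorC : commutative vxor. Proof. by do 2!case=> [[? ?] ?] /=; rewrite [_ (+) _]addbC [X in (_, X, _)]addbC [X in (_,_,X)]addbC. Qed.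
Lemma vxor0 : left_id v0 vxor. Proof. by case=> [[? ?] ?]. Qed.
HB.instance Definition _ := Monoid.isComLaw.Build V v0 vxor vxorA vxorC vxor0.
Definition dot (a b : V) : bool := let: (a1,a2,a3) := a in let: (b1,b2,b3) := b in (a1 && b1) (+) (a2 && b2) (+) (a3 && b3).

Lemma dot_xor l a b : dot l (vxor a b) = dot l a (+) dot l b.
Proof. by move: l a b => [[[] []] []] [[[] []] []] [[[] []] []]. Qed.
Lemma dot_v0 l : dot l v0 = false.
Proof. by move: l => [[[] []] []]. Qed.
Lemma dot0 w : dot v0 w = false.
Proof. by move: w => [[[] []] []]. Qed.

Lemma sumV (R : nmodType) (F : V -> R) : (\sum_(l : V) F l = \sum_(a : bool) \sum_(b : bool) \sum_(c : bool) F (a, b, c))%R.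
Proof. rewrite (pair_bigA _ (fun a b => \sum_(c : bool) F (a, b, c))%R) /=. rewrite (pair_bigA _ (fun p c => F (p.1, p.2, c))) /=. by apply: eq_bigr => [[[a b] c]]. Qed.
Lemma cardV (P : pred V) : (#|P| = \sum_(a : bool) \sum_(b : bool) \sum_(c : bool) (P (a, b, c) : nat))%N.
Proof. rewrite -sum1_card big_mkcond sumV; do 3!(apply: eq_bigr => ? _); by rewrite unfold_in; case: (P _). Qed.
Lemma F3 (l : V) : l != v0 -> #|[pred w : V | (w != v0) && ~~ dot l w]| = 3.
Proof. by rewrite cardV !big_bool; case: l => [[[] []] []]. Qed.
Lemma F3' (u : V) : u != v0 -> #|[pred l : V | (l != v0) && ~~ dot l u]| = 3.
Proof. by rewrite cardV !big_bool; case: u => [[[] []] []]. Qed.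
Lemma F2 (t : V) : ((((t == v0) * 8)%N%:R : int) = \sum_(l : V) (-1) ^+ dot l t)%R.
Proof. by rewrite sumV !big_bool; case: t => [[[] []] []]. Qed.
Lemma card_Vnz : #|[pred w : V | w != v0]| = 7.
Proof. by rewrite cardV !big_bool. Qed.

Section PartB.
Variable n : nat.
Definition fx (v : {ffun 'I_n -> V}) (x : cube n) : V := \big[vxor/v0]_(i | x i) v i.
Definition Sv v : {set cube n} := [set x | fx v x == v0].
Definition ann (v : {ffun 'I_n -> V}) (F : {set 'I_n}) : {set V} :=
  [set l | (l != v0) && [forall i in F, ~~ dot l (v i)]].
Definition good v (c : {ffun 'I_n -> option bool}) := ann v (free c) == set0.

Lemma card_setI_sum (T : finType) (A B : {set T}) : #|A :&: B| = \sum_(x in B) (x \in A).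
Proof.
rewrite -sum1_card big_mkcond [RHS]big_mkcond; apply: eq_bigr => x _.
by rewrite inE; case: (x \in A); case: (x \in B).
Qed.

Lemma sign_fx (l : V) v x :
  ((-1) ^+ dot l (fx v x) : int)%R = (\prod_i (if x i then (-1) ^+ dot l (v i) else 1))%R.
Proof.
rewrite -big_mkcond /fx.
apply: (big_morph (fun t => ((-1) ^+ dot l t : int)%R)).
  by move=> a b; rewrite dot_xor signr_addb.
by rewrite dot_v0.
Qed.

Lemma B1 d v c : (3 <= d)%N -> #|free c| = d -> good v c -> #|Sv v :&: cset c| = (2 ^ (d - 3))%N.
Proof.
move=> d3 hd hg.
  have key : (((#|Sv v :&: cset c| * 8)%N%:R : int) = (2 ^ d)%N%:R)%R.
  rewrite card_setI_sum big_distrl natr_sum /=.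
  under eq_bigr => x _ do rewrite inE F2.
  under eq_bigr => x _ do under eq_bigr => l _ do rewrite sign_fx.
  rewrite exchange_big /=.
  have E : forall l : V, (\sum_(x in cset c) \prod_i (if x i then (-1) ^+ dot l (v i) else 1) =
      \prod_i \sum_(b | compat (c i) b) (if b then (-1) ^+ dot l (v i) else 1) :> int)%R.
    move=> l; rewrite (bigA_distr_big_dep _ (fun i (b : bool) => if b then (-1) ^+ dot l (v i) else 1)%R).
    apply: eq_bigl => x; rewrite inE; apply/forallP/familyP => H i; move: (H i); by rewrite unfold_in.
  under eq_bigr => l _ do rewrite E.
  rewrite (bigD1 v0) //= [X in (_ + X)%R]big1 ?addr0.
    have E0 : forall i, (\sum_(b | compat (c i) b) (if b then (-1) ^+ dot v0 (v i) else 1) :> int)%R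
                  = (if i \in free c then 2 else 1)%R.
      move=> i; rewrite dot0 inE; under eq_bigr do rewrite if_same.
      by case: (c i) => [[]|]; rewrite big_mkcond big_bool.
    under eq_bigr do rewrite E0.
    by rewrite -big_mkcond prodr_const natrX hd.
  move=> l hl.
  have : l \notin ann v (free c) by rewrite (eqP hg) inE.
  rewrite inE hl /= negb_forall => /existsP [i]; rewrite negb_imply negbK => /andP [hi hli].
  rewrite (bigD1 i) //= big_mkcond big_bool /= hli.
  move: hi; rewrite inE => /eqP -> /=.
  by rewrite expr1 addNr mul0r.
move/eqP: key; rewrite eqr_nat.
rewrite -[in 2 ^ d](subnK d3) expnD => /eqP/eqP; rewrite eqn_pmul2r //.
by move/eqP.
Qed.

Lemma card_fam2 (T : finType) (F : {set 'I_n}) (A B : pred T) :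
  #|[pred f : {ffun 'I_n -> T} | [forall i, if i \in F then A (f i) else B (f i)]]| =
  #|A| ^ #|F| * #|B| ^ (n - #|F|).
Proof.
have -> : #|[pred f : {ffun 'I_n -> T} | [forall i, if i \in F then A (f i) else B (f i)]]| =
          #|family (fun i => if i \in F then A else B)|.
  apply: eq_card => f; rewrite !inE; apply/forallP/familyP => H i; move: (H i);
  by case: (i \in F); rewrite unfold_in.
rewrite card_family foldrE big_map big_enum /=.
rewrite (bigID (fun i => i \in F)) /=.
rewrite [X in X * _](eq_bigr (fun _ => #|A|)) => [|i ->] //.
rewrite [X in _ * X](eq_bigr (fun _ => #|B|)) => [|i hi]; last by rewrite (negbTE hi).
have -> : \prod_(i | i \notin F) #|B| = \prod_(i in ~: F) #|B| by apply: eq_bigl => i; rewrite inE.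
by rewrite !prod_nat_const [#|~: F|]cardsCs setCK card_ord.
Qed.

Definition famb (v : {ffun 'I_n -> V}) := [forall i, v i != v0].

Lemma sum_pred (T : finType) (A P : pred T) :
  \sum_(x | A x) (P x : nat) = #|[pred x | A x && P x]|.
Proof.
rewrite -sum1_card big_mkcond [RHS]big_mkcond; apply: eq_bigr => x _.
by rewrite !inE; case: (A x); case: (P x).
Qed.

Lemma fam_P (F : {set 'I_n}) (P : pred V) :
  #|[pred v | famb v && [forall i in F, P (v i)]]| =
  #|[pred w | (w != v0) && P w]| ^ #|F| * 7 ^ (n - #|F|).
Proof.
rewrite -card_Vnz -card_fam2; apply: eq_card => v; rewrite !inE.
apply/andP/forallP => [[/forallP H1 /forallP H2] i | H].
  case: ifP => hi; last exact: H1.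
  by rewrite /= H1 /=; move: (H2 i); rewrite hi.
split; apply/forallP => i; move: (H i); case: ifP => hi //=.
  by case/andP.
by case/andP.
Qed.

Lemma pointwise v (c : {ffun 'I_n -> option bool}) : famb v -> 0 < #|free c| ->
  1 + 2 * \sum_(u | u != v0) [forall i in free c, v i == u] <=
  good v c + \sum_(l | l != v0) [forall i in free c, ~~ dot l (v i)].
Proof.
move=> hv; set F := free c; case/card_gt0P => i0 hi0.
have hu0 : v i0 != v0 by move/forallP: hv.
have Esum : \sum_(u | u != v0) [forall i in F, v i == u] = [forall i in F, v i == v i0].
  rewrite (bigD1 (v i0)) //= big1 ?addn0 // => u /andP [_ hu].
  case: forallP => [/(_ i0)|//]; rewrite hi0 /= => /eqP E.
  by rewrite E eqxx in hu.
rewrite Esum; case hc : [forall i in F, v i == v i0].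
  apply: (@leq_trans 3) => //; apply: leq_trans (leq_addl _ _).
  rewrite -(F3' hu0) -sum_pred; apply: leq_sum => l _.
  case hd: (dot l (v i0)) => //=; rewrite lt0b.
  apply/forallP => i; apply/implyP => hi; move/forallP: hc => /(_ i).
  by rewrite hi => /eqP ->; rewrite hd.
case hg: (good v c); first by rewrite addn0 leq_addr.
case/set0Pn: (negbT hg) => l; rewrite inE => /andP [hl hf].
by rewrite (bigD1 l) //= hf addn0 add0n leq_addr.
Qed.

Lemma sumVnz m : \sum_(l : V | l != v0) m = 7 * m.
Proof. by rewrite -card_Vnz -sum_nat_const. Qed.

Lemma count_good (c : {ffun 'I_n -> option bool}) : 0 < #|free c| ->
  7 ^ n + 2 * (7 * 7 ^ (n - #|free c|)) <=
  #|[pred v | famb v && good v c]| + 7 * (3 ^ #|free c| * 7 ^ (n - #|free c|)).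
Proof.
move=> hF; set F := free c.
have : \sum_(v | famb v) (1 + 2 * \sum_(u | u != v0) [forall i in F, v i == u]) <=
       \sum_(v | famb v) (good v c + \sum_(l | l != v0) [forall i in F, ~~ dot l (v i)]).
  by apply: leq_sum => v hv; exact: pointwise.
rewrite [X in X <= _]big_split [X in _ <= X]big_split.
have E1 : \sum_(v | famb v) 1 = 7 ^ n.
  have := fam_P set0 xpredT; rewrite cards0 expn0 mul1n subn0 => <-.
  rewrite -sum_pred; apply: eq_bigr => v _.
  by apply/esym/eqP; rewrite eqb1; apply/forallP => i; rewrite inE.
have E2 : \sum_(v | famb v) 2 * \sum_(u | u != v0) [forall i in F, v i == u] =
          2 * (7 * 7 ^ (n - #|F|)).
  rewrite -big_distrr /= exchange_big /= -sumVnz; congr (_ * _).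
  apply: eq_bigr => u hu; rewrite (sum_pred famb (fun v => [forall i in F, v i == u])).
  rewrite (fam_P F (pred1 u)).
  have -> : #|[pred w | (w != v0) && pred1 u w]| = 1.
    rewrite -(card1 u); apply: eq_card => w; rewrite !inE.
    by case: (w =P u) => [->|_]; rewrite ?hu ?andbF.
  by rewrite exp1n mul1n.
have E3 : \sum_(v | famb v) \sum_(l | l != v0) [forall i in F, ~~ dot l (v i)] =
          7 * (3 ^ #|F| * 7 ^ (n - #|F|)).
  rewrite exchange_big /= -sumVnz; apply: eq_bigr => l hl.
  rewrite (sum_pred famb (fun v => [forall i in F, ~~ dot l (v i)])).
  by rewrite (fam_P F [pred w | ~~ dot l w]) F3.
by rewrite E1 E2 E3 sum_pred.
Qed.

Lemma card_famb : \sum_(v | famb v) 1 = 7 ^ n.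
Proof.
have := fam_P set0 xpredT; rewrite cards0 expn0 mul1n subn0 => <-.
rewrite -sum_pred; apply: eq_bigr => v _.
by apply/esym/eqP; rewrite eqb1; apply/forallP => i; rewrite inE.
Qed.

Lemma Ncd d : #|[set c : {ffun 'I_n -> option bool} | #|free c| == d]| = 'C(n, d) * 2 ^ (n - d).
Proof.
rewrite cardsum.
have E : forall c : {ffun 'I_n -> option bool},
    (#|free c| == d : nat) = \sum_(F : {set 'I_n} | #|F| == d) (free c == F).
  move=> c; case h: (#|free c| == d).
    rewrite (bigD1 (free c)) //= eqxx big1 // => F /andP [_ hF].
    by rewrite eq_sym (negbTE hF).
  rewrite big1 // => F hF; case: eqP => // E.
  by rewrite E hF in h.
rewrite (eq_bigr _ (fun c _ => E c)) exchange_big /=.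
rewrite (eq_bigr (fun _ => 2 ^ (n - d))) => [|F /eqP hF].
  have -> : \sum_(F : {set 'I_n} | #|F| == d) 2 ^ (n - d) =
            \sum_(F in [set F : {set 'I_n} | #|F| == d]) 2 ^ (n - d).
    by apply: eq_bigl => F; rewrite inE.
  by rewrite sum_nat_const card_draws card_ord.
rewrite -cardsum.
have -> : #|[set c : {ffun 'I_n -> option bool} | free c == F]| =
          #|[pred c : {ffun 'I_n -> option bool} | [forall i, if i \in F then
               pred1 None (c i) else [pred o : option bool | o != None] (c i)]]|.
  apply: eq_card => c; rewrite !inE; apply/eqP/forallP => [<- i | H].
    by rewrite /free in_set; case: (c i).
  apply/setP => i; rewrite inE; move: (H i); case: (i \in F) => /= h.
    by rewrite h.
  by apply/negbTE.
rewrite card_fam2 hF.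
have -> : #|pred1 (None : option bool)| = 1 by rewrite card1.
have -> : #|[pred o : option bool | o != None]| = 2.
  by rewrite -[LHS]/#|predC1 None| cardC1 card_option card_bool.
by rewrite exp1n mul1n.
Qed.
End PartB.

Lemma lowN d k : (3 <= d)%N -> ('C(k + d, d) * 2 ^ k * 7 ^ (d - 1) <=
   Lam (k + d) d (2 ^ (d - 3)) * 7 ^ (d - 1) + 'C(k + d, d) * 2 ^ k * (3 ^ d - 2))%N.
Proof.
move=> d3; set n := k + d; set s := 2 ^ (d - 3).
have nd : n - d = k by rewrite /n addnK.
set L := Lam n d s.
have S1 : \sum_(v | famb v) LamS d s (@Sv n v) <= 7 ^ n * L.
  rewrite -card_famb big_distrl /=; apply: leq_sum => v _; rewrite mul1n.
  exact: (@leq_bigmax _ (fun S => LamS d s S) (Sv v)).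
have S2 : forall v, \sum_(c : {ffun 'I_n -> option bool} | #|free c| == d) good v c <= LamS d s (@Sv n v).
  move=> v; rewrite sum_pred LamSE; apply: subset_leq_card; apply/subsetP => c.
  rewrite !inE => /andP [/eqP hd hg]; rewrite hd eqxx /=.
  by rewrite (B1 d3 hd hg).
have S3 : \sum_(v | famb v) \sum_(c : {ffun 'I_n -> option bool} | #|free c| == d) good v c <= 7 ^ n * L.
  by apply: leq_trans S1; apply: leq_sum => v _; exact: S2.
rewrite exchange_big /= in S3.
have S4 : \sum_(c : {ffun 'I_n -> option bool} | #|free c| == d)
            (7 ^ n + 2 * (7 * 7 ^ k)) <=
          \sum_(c : {ffun 'I_n -> option bool} | #|free c| == d)
            (\sum_(v | famb v) good v c + 7 * (3 ^ d * 7 ^ k)).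
  apply: leq_sum => c /eqP hc; rewrite sum_pred -nd -hc.
  apply: count_good; rewrite hc; exact: leq_trans d3.
rewrite big_split [X in _ <= X]big_split /= in S4.
have Ec : forall m, \sum_(c : {ffun 'I_n -> option bool} | #|free c| == d) m = 'C(n, d) * 2 ^ k * m.
  move=> m; rewrite -nd -Ncd -sum_nat_const; apply: eq_bigl => c; by rewrite inE.
rewrite !Ec in S4.
have H := leq_trans S4 (leq_add S3 (leqnn _)).
set T := 'C(n, d) * 2 ^ k in H *; set P := 7 ^ (d - 1) in H *.
have hd1 : d = (d - 1).+1 by rewrite subn1 prednK // (leq_trans _ d3).
have e7 : 7 ^ n = 7 * 7 ^ k * P by rewrite /n /P {1}hd1 expnD expnS; ring.
have H' : (7 * 7 ^ k) * (T * (P + 2)) <= (7 * 7 ^ k) * (L * P + T * 3 ^ d).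
  move: H; rewrite e7.
  have -> : T * (7 * 7 ^ k * P) + T * (2 * (7 * 7 ^ k)) = (7 * 7 ^ k) * (T * (P + 2)) by ring.
  have -> : 7 * 7 ^ k * P * L + T * (7 * (3 ^ d * 7 ^ k)) = (7 * 7 ^ k) * (L * P + T * 3 ^ d) by ring.
  by [].
rewrite leq_pmul2l ?muln_gt0 ?expn_gt0 // in H'.
rewrite -(leq_add2r (T * 2)) -addnA -[in X in _ <= X]mulnDr subnK; last first.
  by apply: (@leq_trans (3 ^ 1)) => //; rewrite leq_pexp2l // (leq_trans _ d3).
by rewrite -mulnDr.
Qed.


End Aux.
Import Aux.
From mathcomp Require Import all_classical all_reals all_analysis.
From mathcomp Require Import lra.
Import Order.TTheory GRing.Theory Num.Theory.
Import numFieldNormedType.Exports.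
Local Open Scope ring_scope.

Lemma real_aux (R : realFieldType) (T L A B : R) : 0 < T -> 0 < B ->
  T * B <= L * B + T * A -> 1 - A / B <= L / T.
Proof.
move=> hT hB H; rewrite ler_pdivlMr // -(ler_pM2r hB).
have -> : (1 - A / B) * T * B = T * B - T * A by field; rewrite gt_eqF.
by rewrite lerBlDr.
Qed.

Theorem mainTheorem5 (R : realType) (d : nat) :
  (3 <= d)%N ->
  1 - (3 ^ d - 2)%:R / (7 ^ (d - 1))%:R <= lambda R d (2 ^ (d - 3)).
Proof.
move=> d3.
set s := (2 ^ (d - 3))%N.
set u := (fun k : nat => ((Lam (k + d) d s)%:R / ('C(k + d, d) * 2 ^ k)%:R)%R : R).
have Tpos k : (0 < 'C(k + d, d) * 2 ^ k)%N by rewrite muln_gt0 bin_gt0 leq_addl expn_gt0.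
have Tpos' k : (0 : R) < ('C(k + d, d) * 2 ^ k)%:R by rewrite ltr0n.
have Bpos : (0 : R) < (7 ^ (d - 1))%:R by rewrite ltr0n expn_gt0.
have lb k : 1 - (3 ^ d - 2)%:R / (7 ^ (d - 1))%:R <= u k.
  apply: real_aux => //.
  by rewrite -!natrM -natrD ler_nat lowN.
have ni : nonincreasing_seq u.
  apply/nonincreasing_seqP => k.
  rewrite /u ler_pdivrMr // mulrAC ler_pdivlMr // -!natrM ler_nat.
  exact: monoN.
have cv : cvgn u.
  apply: nonincreasing_is_cvgn => //.
  exists 0 => _ [k _ <-]; rewrite /u divr_ge0 //.
have -> : lambda R d s = limn u by [].
apply: limr_ge => //.
by near=> k; apply: lb.
Unshelve. all: by end_near.
Qed.
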